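(* Let $X$ be a compact topological space equipped with a continuous action of a strongly sofic monoid $M$, and let $\Sigma=(D_i,\sigma_i)_{i\in I}$ be a strong sofic approximation of $M$. Let $\rho$ and $\rho'$ be continuous pseudometrics on $X$ with $\rho'$ dynamically generating for $(X,M)$. Let $F\subset M$ be finite and $\delta>0$. Then there exist a finite subset $F'\subset M$, $\delta'>0$ and $i_0\in I$ such that $\operatorname{Map}(X,M,\rho',F',\delta',\sigma_i)\subset\operatorname{Map}(X,M,\rho,F,\delta,\sigma_i)$ for all $i\ge i_0$.
   Context: Hamming metric on $\operatorname{Map}(D)$ (maps $D\to D$, $D$ finite non-empty): $d_D^{\mathrm{Ham}}(f,g)=\frac{1}{|D|}|\{v:f(v)\ne g(v)\}|$. A strong sofic approximation of $M$ is a net $(D_i,\sigma_i)_{i\in I}$ over a directed set, $D_i$ non-empty finite, $\sigma_i\colon M\to\operatorname{Map}(D_i)$, with $\sigma_i(1_M)=\mathrm{Id}_{D_i}$; $\lim_i d^{\mathrm{Ham}}_{D_i}(\sigma_i(m_1m_2),\sigma_i(m_1)\sigma_i(m_2))=0$ for all $m_1,m_2$; $\lim_i d^{\mathrm{Ham}}_{D_i}(\sigma_i(m_1),\sigma_i(m_2))=1$ for distinct $m_1,m_2$; and for every finite $K\subset M$ an integer $\Delta_K\ge1$ with $|\sigma_i(k)^{-1}(v)|\le\Delta_K$ for all $i$, $k\in K$, $v\in D_i$. A monoid is strongly sofic iff it has one. A pseudometric $\rho'$ is dynamically generating if for distinct $x,y\in X$ some $m\in M$ has $\rho'(mx,my)>0$.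 For non-empty finite $D$ and a pseudometric $\rho$ on $X$, $\rho_2^D(\varphi,\psi)=(\frac{1}{|D|}\sum_{v\in D}\rho(\varphi(v),\psi(v))^2)^{1/2}$ on $X^D$, $(m\varphi)(v)=m\varphi(v)$, and for finite $F\subset M$, $\delta>0$, $\sigma\colon M\to\operatorname{Map}(D)$: $\operatorname{Map}(X,M,\rho,F,\delta,\sigma)=\{\varphi\in X^D:\rho_2^D(\varphi\circ\sigma(m),m\varphi)\le\delta\ \forall m\in F\}$. *)

(* Defs.v *)
From HB Require Import structures.
From mathcomp Require Import all_boot all_order all_algebra.
From mathcomp Require Import all_classical all_reals all_analysis.
Set Implicit Arguments. Unset Strict Implicit. Unset Printing Implicit Defensive.
Import Order.TTheory GRing.Theory Num.Theory.
Import numFieldNormedType.Exports.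
Local Open Scope classical_set_scope.
Local Open Scope ring_scope.

Definition is_monoid (M : Type) (mul : M -> M -> M) (one : M) : Prop :=
  [/\ forall a b c, mul a (mul b c) = mul (mul a b) c,
      forall a, mul one a = a & forall a, mul a one = a].

Definition is_cont_action (M : Type) (mul : M -> M -> M) (one : M)
  (X : topologicalType) (act : M -> X -> X) : Prop :=
  [/\ forall x, act one x = x,
      forall m1 m2 x, act (mul m1 m2) x = act m1 (act m2 x) &
      forall m, continuous (act m)].

Definition is_cont_pseudometric (R : realType) (X : topologicalType)
  (rho : X -> X -> R) : Prop :=
  [/\ forall x, rho x x = 0,
      forall x y, rho x y = rho y x,
      forall x y z, rho x z <= rho x y + rho y z,
      forall x y, 0 <= rho x y &
      continuous (fun p : X * X => rho p.1 p.2)].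

Definition dyn_generating (M : Type) (X : Type) (act : M -> X -> X)
  (R : realType) (rho : X -> X -> R) : Prop :=
  forall x y : X, x <> y -> exists m : M, 0 < rho (act m x) (act m y).

Definition is_directed (I : Type) (le : I -> I -> Prop) : Prop :=
  [/\ inhabited I, forall i, le i i,
      forall i j k, le i j -> le j k -> le i k &
      forall i j, exists k, le i k /\ le j k].

Definition net_lim (R : realType) (I : Type) (le : I -> I -> Prop)
  (f : I -> R) (l : R) : Prop :=
  forall eps : R, 0 < eps -> exists i0, forall i, le i0 i -> `|f i - l| < eps.

Definition d_ham (R : realType) (D : finType) (f g : D -> D) : R :=
  #|[set v : D | f v != g v]|%:R / #|D|%:R.

Definition strong_sofic_approx (R : realType) (M : Type) (mul : M -> M -> M)
  (one : M) (I : Type) (le : I -> I -> Prop) (D : I -> finType)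
  (sigma : forall i, M -> D i -> D i) : Prop :=
  [/\ forall i, (0 < #|D i|)%N,
      forall i (v : D i), sigma i one v = v,
      forall m1 m2, net_lim le
        (fun i => @d_ham R _ (sigma i (mul m1 m2)) (sigma i m1 \o sigma i m2)) 0,
      forall m1 m2, m1 <> m2 ->
        net_lim le (fun i => @d_ham R _ (sigma i m1) (sigma i m2)) 1 &
      forall K : set M, finite_set K -> exists Delta : nat, (1 <= Delta)%N /\
        forall i k (v : D i), K k ->
          (#|[set w : D i | sigma i k w == v]| <= Delta)%N].

Definition rho2 (R : realType) (X : Type) (rho : X -> X -> R) (D : finType)
  (phi psi : D -> X) : R :=
  Num.sqrt ((\sum_(v : D) rho (phi v) (psi v) ^+ 2) / #|D|%:R).

Definition Map_set (R : realType) (X : Type) (M : Type) (act : M -> X -> X)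
  (rho : X -> X -> R) (F : set M) (delta : R) (D : finType)
  (sigma : M -> D -> D) : set (D -> X) :=
  [set phi : D -> X | forall m, F m ->
     rho2 rho (fun v => phi (sigma m v)) (fun v => act m (phi v)) <= delta].

(* Main.v *)
Require Import Defs.
From Stdlib Require List.
From HB Require Import structures.
From mathcomp Require Import all_boot all_order all_algebra.
From mathcomp Require Import all_classical all_reals all_analysis.
From mathcomp Require Import lra ring.
Import Order.TTheory GRing.Theory Num.Theory.
Import numFieldNormedType.Exports.
Local Open Scope classical_set_scope.
Local Open Scope ring_scope.
Lemma fin_cover (Y : topologicalType) (J : Type) (f : J -> set Y) :
  compact [set: Y] -> (forall j, open (f j)) -> (forall y, exists j, f j y) ->
  exists s : seq J, forall y, exists2 j, List.In j s & f j y.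
Proof.
move=> /compact_near_coveringP cpt fo fc.
pose F := fun P : set (seq J) => exists s0 : seq J,
  forall s, (forall j, List.In j s0 -> List.In j s) -> P s.
have FF : Filter F.
  split.
  - by exists [::].
  - move=> P Q [s0 H0] [s1 H1]; exists (s0 ++ s1) => s Hs; split.
      by apply: H0 => j Hj; apply: Hs; apply: List.in_or_app; left.
    by apply: H1 => j Hj; apply: Hs; apply: List.in_or_app; right.
  - by move=> P Q PQ [s0 H0]; exists s0 => s Hs; apply: PQ; apply: H0.
have := cpt _ F (fun s y => exists2 j, List.In j s & f j y) FF.
case.
- move=> y _; have [j fjy] := fc y.
  exists (f j, [set s | List.In j s]).
    split => //=; first by apply: open_nbhs_nbhs; split.
    by exists [:: j] => s; apply; left.
  by case=> y' s /= [? ?]; exists j.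
- move=> s0 H0; exists s0 => y; exact: (H0 s0 (fun j h => h) y I).
Qed.

Lemma list_ub (R : realType) (J : Type) (g : J -> R) (s : seq J) :
  exists B, forall j, List.In j s -> g j <= B.
Proof.
elim: s => [|a s [B HB]]; first by exists 0.
exists (Num.max (g a) B) => j /= [<-|/HB h]; first by rewrite le_max lexx.
by rewrite le_max h orbT.
Qed.

Lemma list_lb (R : realType) (J : Type) (g : J -> R) (s : seq J) :
  (forall j, 0 < g j) -> exists2 b, 0 < b & forall j, List.In j s -> b <= g j.
Proof.
move=> gp; elim: s => [|a s [b b0 Hb]]; first by exists 1.
exists (Num.min (g a) b); first by rewrite lt_min gp b0.
move=> j /= [<-|/Hb h]; first by rewrite ge_min lexx.
by rewrite ge_min h orbT.
Qed.

Lemma cont_comp_act (R : realType) (X : topologicalType) (M : Type)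
  (act : M -> X -> X) (r : X -> X -> R) m :
  (forall m, continuous (act m)) -> continuous (fun p : X * X => r p.1 p.2) ->
  continuous (fun p : X * X => r (act m p.1) (act m p.2)).
Proof.
move=> ac rc p.
have h : continuous (fun p : X * X => (act m p.1, act m p.2)).
  move=> q; apply: cvg_pair.
    exact: (cvg_comp fst (act m) cvg_fst (ac m q.1)).
  exact: (cvg_comp snd (act m) cvg_snd (ac m q.2)).
exact: (continuous_comp (h p) (rc _)).
Qed.

Lemma compactXX (X : topologicalType) : compact [set: X] -> compact [set: X * X].
Proof. by move=> c; rewrite -setXTT; apply: compact_setX. Qed.

Lemma rho_bounded (R : realType) (X : topologicalType) (rho : X -> X -> R) :
  compact [set: X] -> continuous (fun p : X * X => rho p.1 p.2) ->
  (forall x y, 0 <= rho x y) ->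
  exists2 C, 0 < C & forall x y, rho x y <= C.
Proof.
move=> cX rc rp.
have o : forall n : nat, open [set p : X * X | rho p.1 p.2 < n%:R].
  move=> n; apply: (@open_comp _ _ (fun p : X * X => rho p.1 p.2) [set x | x < n%:R]).
    by move=> p _; apply: rc.
  exact: open_lt.
have c : forall p : X * X, exists n : nat, rho p.1 p.2 < n%:R.
  move=> p; exists (Num.bound (rho p.1 p.2)) => /=; exact: archi_boundP.
have [s Hs] := @fin_cover _ nat _ (@compactXX _ cX) o c.
have [B HB] := @list_ub R _ (fun n : nat => n%:R : R) s.
exists (Num.max B 1); first by rewrite lt_max ltr01 orbT.
move=> x y; have [n /HB hn /= hr] := Hs (x, y).
apply/ltW; rewrite lt_max; apply/orP; left; exact: lt_le_trans hr hn.
Qed.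

Lemma sep (R : realType) (X : topologicalType) (M : Type) (act : M -> X -> X)
  (rho rho' : X -> X -> R) :
  compact [set: X] -> (forall m, continuous (act m)) ->
  continuous (fun p : X * X => rho p.1 p.2) ->
  continuous (fun p : X * X => rho' p.1 p.2) ->
  (forall x, rho x x = 0) ->
  (forall x y : X, x <> y -> exists m : M, 0 < rho' (act m x) (act m y)) ->
  forall eps, 0 < eps -> exists s : seq M, exists2 eta, 0 < eta &
    forall x y, (forall m, List.In m s -> rho' (act m x) (act m y) < eta) -> rho x y < eps.
Proof.
move=> cX ac rc rc' r0 dg eps eps0.
pose f := fun j : option (M * {posnum R}) => match j with
  | None => [set p : X * X | rho p.1 p.2 < eps]
  | Some (m, r) => [set p : X * X | r%:num < rho' (act m p.1) (act m p.2)] end.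
have o : forall j, open (f j).
  case=> [[m r]|] /=.
    apply: (@open_comp _ _ (fun p : X * X => rho' (act m p.1) (act m p.2)) [set x | r%:num < x]).
      by move=> p _; exact: (@cont_comp_act R X M act rho' m ac rc').
    exact: open_gt.
  apply: (@open_comp _ _ (fun p : X * X => rho p.1 p.2) [set x | x < eps]).
    by move=> p _; apply: rc.
  exact: open_lt.
have c : forall p, exists j, f j p.
  case=> x y.
  have [lt|ge] := ltP (rho x y) eps; first by exists None.
  have xy : x <> y by move=> e; move: ge; rewrite e r0 leNgt eps0.
  have [m hm] := dg x y xy.
  have h2 : 0 < rho' (act m x) (act m y) / 2 by rewrite divr_gt0.
  exists (Some (m, PosNum h2)) => /=.
  by rewrite ltr_pdivrMr // ltr_pMr // ltr1n.
have [s Hs] := @fin_cover _ _ f (@compactXX _ cX) o c.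
pose g := fun j : option (M * {posnum R}) => match j with
  | None => 1 | Some (_, r) => r%:num end.
have gp : forall j, 0 < g j by case=> [[m r]|] /=.
have [eta eta0 Heta] := @list_lb R _ g s gp.
exists (pmap (fun j => omap fst j) s).
exists eta => // x y H.
have [j jin fj] := Hs (x, y).
case: j jin fj => [[m r]|] jin /= fj; last done.
have inm : List.In m (pmap (fun j => omap fst j) s).
  move: jin; clear; elim: s => [|a s IH] //= [->|/IH h] /=; first by left.
  by case: a => [[??]|] //=; right.
have := H m inm; have := Heta _ jin => /= h1 h2.
have := lt_le_trans (lt_le_trans h2 h1) (ltW fj); by rewrite ltxx.
Qed.
Lemma card_real (R : realType) (D : finType) (A : {set D}) :
  \sum_v ((v \in A)%:R : R) = #|A|%:R.
Proof.
rewrite -[RHS](_ : \sum_(v in A) (1 : R) = _); last by rewrite sumr_const.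
by rewrite [RHS]big_mkcond /=; apply: eq_bigr => v _; case: (v \in A).
Qed.

Lemma preim_card (D : finType) (s : D -> D) (B : {set D}) (De : nat) :
  (forall w, #|[set v | s v == w]%SET| <= De)%N ->
  (#|[set v | s v \in B]%SET| <= De * #|B|)%N.
Proof.
move=> H; rewrite -[#|[set v | s v \in B]%SET|]sum1_card.
rewrite (partition_big s (mem B)) /=; last by move=> v; rewrite inE.
rewrite mulnC -sum_nat_const; apply: leq_sum => w wB.
rewrite (@leq_trans #|[set v | s v == w]%SET|) //.
rewrite -sum1_card; rewrite big_mkcond [X in (_ <= X)%N]big_mkcond /=.
apply: leq_sum => v _; rewrite !inE; by case: (s v == w); rewrite ?andbT ?andbF //; case: (_ \in _).
Qed.

Lemma cheb (R : realType) (D : finType) (f : D -> R) (t d : R) :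
  (0 < #|D|)%N -> (forall v, 0 <= f v) -> 0 < t ->
  Num.sqrt ((\sum_v f v ^+ 2) / #|D|%:R) <= d ->
  #|[set v | t < f v]%SET|%:R * t ^+ 2 <= d ^+ 2 * #|D|%:R.
Proof.
move=> D0 fp t0 hs.
have n0 : 0 < (#|D|%:R : R) by rewrite ltr0n.
set S := \sum_v f v ^+ 2.
have S0 : 0 <= S by apply: sumr_ge0 => v _; rewrite sqr_ge0.
have h1 : S / #|D|%:R <= d ^+ 2.
  rewrite -(@sqr_sqrtr _ (S / #|D|%:R)); last by rewrite divr_ge0 // ltW.
  have := sqrtr_ge0 (S / #|D|%:R) => h0.
  by rewrite ler_pXn2r // ?inE //; apply: le_trans hs.
have h2 : S <= d ^+ 2 * #|D|%:R by rewrite -ler_pdivrMr.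
apply: le_trans h2.
rewrite -card_real mulr_suml; apply: ler_sum => v _; rewrite inE.
case: ltP => h; last by rewrite mul0r sqr_ge0.
rewrite mul1r ler_pXn2r ?inE.
- exact: ltW.
- by [].
- by rewrite nnegrE ltW.
- by rewrite nnegrE fp.
Qed.

Lemma cheb2 (R : realType) (D : finType) (f : D -> R) (t c0 : R) :
  (0 < #|D|)%N -> (forall v, 0 <= f v) -> 0 < t -> 0 < c0 -> c0 <= 1 ->
  Num.sqrt ((\sum_v f v ^+ 2) / #|D|%:R) <= t * c0 ->
  #|[set v | t < f v]%SET|%:R <= c0 * #|D|%:R.
Proof.
move=> D0 fp t0 c00 c01 hs.
have h := @cheb R D f t _ D0 fp t0 hs.
have n0 : 0 < (#|D|%:R : R) by rewrite ltr0n.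
have t2 : 0 < t ^+ 2 by rewrite exprn_gt0.
rewrite -(@ler_pM2r _ (t ^+ 2)) //; apply: le_trans h _.
set x := (#|D|%:R : R).
have : c0 ^+ 2 <= c0 by rewrite expr2 ler_piMl // ltW.
move=> hc; rewrite exprMn -mulrA [X in _ <= X]mulrC -[X in _ <= X]mulrA.
have -> : t * (t * (c0 * x)) = t ^+ 2 * (c0 * x) by rewrite expr2 mulrA.
apply: ler_wpM2l; first exact: ltW.
by apply: ler_wpM2r; [rewrite /x ler0n|].
Qed.
Lemma mk_card (D : finType) (b : pred D) :
  #|[set v | b v]| = #|[set v | b v]%SET|.
Proof.
apply: eq_card => v; rewrite finset.inE.
by apply/idP/idP; rewrite in_setE.
Qed.
Lemma sum_list_ge (R : realType) (T : Type) (g : T -> R) (l : seq T) s :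
  (forall t, 0 <= g t) -> List.In s l -> g s <= \sum_(t <- l) g t.
Proof.
move=> gp; elim: l => [|a l IH] //= [->|/IH h]; rewrite big_cons.
  by rewrite lerDl sumr_ge0.
by rewrite (le_trans h) // lerDr.
Qed.

Section Core.
Variables (R : realType) (X : Type) (M : Type) (mul : M -> M -> M)
  (act : M -> X -> X) (rho rho' : X -> X -> R).
Hypothesis act_mul : forall s m x, act (mul s m) x = act s (act m x).
Hypothesis r'0 : forall x, rho' x x = 0.
Hypothesis r'sym : forall x y, rho' x y = rho' y x.
Hypothesis r'tri : forall x y z, rho' x z <= rho' x y + rho' y z.
Hypothesis r0 : forall x y, 0 <= rho x y.
Variables (C eps eta : R) (l : seq M).
Hypothesis Cb : forall x y, rho x y <= C.
Hypothesis eta0 : 0 < eta.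
Hypothesis eps0 : 0 <= eps.
Hypothesis sepH : forall x y,
  (forall s, List.In s l -> rho' (act s x) (act s y) < eta) -> rho x y < eps.

Variables (D : finType) (sg : M -> D -> D) (phi : D -> X) (m : M).

Definition B1 s := [set w | eta / 4 < rho' (phi (sg s w)) (act s (phi w))]%SET.
Definition A1 s := [set v | sg m v \in B1 s]%SET.
Definition A2 s := [set v | sg (mul s m) v != sg s (sg m v)]%SET.
Definition A3 s := [set v | eta / 4 < rho' (phi (sg (mul s m) v)) (act (mul s m) (phi v))]%SET.

Let g s v : R := (v \in A1 s)%:R + (v \in A2 s)%:R + (v \in A3 s)%:R.

Lemma g_ge0 s v : 0 <= g s v.
Proof. by rewrite /g !addr_ge0 ?ler0n. Qed.

Lemma pointwise v :
  rho (phi (sg m v)) (act m (phi v)) ^+ 2 <= eps ^+ 2 + C ^+ 2 * \sum_(s <- l) g s v.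
Proof.
have C0 : 0 <= C by apply: le_trans (r0 (phi v) (phi v)) (Cb _ _).
have S0 : 0 <= \sum_(s <- l) g s v by apply: sumr_ge0 => s _; exact: g_ge0.
have [H|H] := pselect (forall s, List.In s l ->
  [/\ v \notin A1 s, v \notin A2 s & v \notin A3 s]).
  have lt : rho (phi (sg m v)) (act m (phi v)) < eps.
    apply: sepH => s /H [n1 n2 n3].
    move: n1 n2 n3; rewrite !inE -!leNgt negbK => n1 /eqP n2 n3.
    rewrite (le_lt_trans (r'tri _ (phi (sg s (sg m v))) _)) //.
    rewrite r'sym -act_mul; rewrite n2 in n3.
    have : eta / 4 + eta / 4 < eta by move: eta0 => e0; lra.
    apply: le_lt_trans; exact: lerD.
  apply: le_trans (_ : eps ^+ 2 <= _); last by rewrite lerDl mulr_ge0 ?sqr_ge0.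
  by rewrite ler_pXn2r ?nnegrE ?r0 // ltW.
move/existsNP: H => [s /not_implyP [sin ns]].
have g1 : 1 <= g s v.
  move: ns; rewrite /g; case: (v \in A1 s); case: (v \in A2 s); case: (v \in A3 s) => /= ns;
  first [by lra | by exfalso; apply: ns].
have h1 : 1 <= \sum_(s <- l) g s v.
  apply: le_trans g1 _; apply: (@sum_list_ge R M (fun s => g s v)) => //.
  move=> t; exact: g_ge0.
have h2 : C ^+ 2 <= C ^+ 2 * \sum_(s <- l) g s v.
  by rewrite ler_peMr // sqr_ge0.
have h3 : rho (phi (sg m v)) (act m (phi v)) ^+ 2 <= C ^+ 2.
  by rewrite ler_pXn2r ?nnegrE ?r0 ?Cb.
apply: le_trans h3 _; apply: le_trans h2 _; by rewrite lerDr sqr_ge0.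
Qed.
Lemma core_sum :
  \sum_v rho (phi (sg m v)) (act m (phi v)) ^+ 2 <=
  #|D|%:R * eps ^+ 2 +
  C ^+ 2 * \sum_(s <- l) (#|A1 s|%:R + #|A2 s|%:R + #|A3 s|%:R).
Proof.
apply: le_trans (ler_sum _ (fun v _ => pointwise v)) _.
rewrite big_split /= -[X in _ + X <= _]mulr_sumr exchange_big /=.
apply: lerD.
  by rewrite sumr_const cardT -cardE mulr_natl.
apply: ler_wpM2l; first exact: sqr_ge0.
apply: ler_sum => s _; rewrite /g !big_split /= !card_real.
by [].
Qed.
End Core.
Lemma in_classic (T : Type) (x : {classic T}) (s : seq {classic T}) :
  x \in s <-> List.In x s.
Proof.
elim: s => [|a s IH] //=; rewrite in_cons; split.
  by case/orP => [/eqP ->|/IH h]; [left|right].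
by case=> [->|/IH ->]; rewrite ?eqxx ?orbT.
Qed.

Lemma fin_list (T : Type) (A : set T) : finite_set A ->
  exists s : seq T, forall x, A x <-> List.In x s.
Proof.
move=> /(@finite_fsetP {classic T}) [S ->]; exists (finmap.enum_fset S) => x.
by rewrite -in_classic.
Qed.

Lemma list_fin (T : Type) (s : seq T) : finite_set [set x | List.In x s].
Proof.
apply: (@sub_finite_set {classic T} _ [set` (s : seq {classic T})]); last exact: finite_seq.
by move=> x /= h; rewrite /= in_classic.
Qed.

Lemma ev_list (I : Type) (le : I -> I -> Prop) (J : Type) (P : J -> I -> Prop) (l : seq J) :
  inhabited I -> (forall i j k, le i j -> le j k -> le i k) ->
  (forall i j, exists k, le i k /\ le j k) ->
  (forall j, exists i0, forall i, le i0 i -> P j i) ->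
  exists i0, forall i, le i0 i -> forall j, List.In j l -> P j i.
Proof.
move=> [i1] tr ub H; elim: l => [|a l [i0 H0]]; first by exists i1.
have [i2 H2] := H a; have [k [k0 k2]] := ub i0 i2.
exists k => i ki j /= [<-|jl]; first by apply: H2; exact: tr ki.
by apply: H0 => //; exact: tr ki.
Qed.

Lemma sum_le_size (R : realType) (T : Type) (h : T -> R) (l : seq T) K :
  (forall s, List.In s l -> h s <= K) -> \sum_(s <- l) h s <= (size l)%:R * K.
Proof.
elim: l => [|a l IH] H; first by rewrite big_nil mul0r.
rewrite big_cons /= -addn1 natrD mulrDl mul1r addrC.
apply: lerD; first by apply: IH => s sl; apply: H; right.
by apply: H; left.
Qed.
Lemma numfin (R : realType) (delta C N De c0 n : R) :
  0 < delta -> 0 < C -> 0 <= N -> 0 <= De -> 0 < n ->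
  c0 <= (delta ^+ 2 / (4 * C ^+ 2 * (N + 1))) / (De + 1) ->
  n * (delta / 2) ^+ 2 + C ^+ 2 * (N * (De * (c0 * n) +
     (delta ^+ 2 / (4 * C ^+ 2 * (N + 1))) * n + c0 * n)) <= delta ^+ 2 * n.
Proof.
set k := delta ^+ 2 / (4 * C ^+ 2 * (N + 1)).
move=> d0 C0 N0 De0 n0 hc.
have De1 : 0 < De + 1 by lra.
have hc' : (De + 1) * c0 <= k by rewrite mulrC -ler_pdivlMr.
have hk : C ^+ 2 * k * (N + 1) = delta ^+ 2 / 4.
  rewrite /k; field; apply/andP; split; [lra|].
  by rewrite gt_eqF.
set P := C ^+ 2 * k in hk.
have P0 : 0 <= P.
  rewrite /P /k; apply: mulr_ge0; first exact: sqr_ge0.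
  apply: divr_ge0; first exact: sqr_ge0.
  apply: mulr_ge0; [apply: mulr_ge0; [lra|exact: sqr_ge0]| lra].
have s1 : De * (c0 * n) + k * n + c0 * n <= 2 * k * n.
  have : (De + 1) * c0 * n <= k * n by rewrite ler_wpM2r // ltW.
  lra.
have s2 : C ^+ 2 * (N * (De * (c0 * n) + k * n + c0 * n)) <= P * N * (2 * n).
  have : C ^+ 2 * (N * (De * (c0 * n) + k * n + c0 * n)) <= C ^+ 2 * (N * (2 * k * n)).
    by rewrite ler_wpM2l ?sqr_ge0 // ler_wpM2l.
  move=> h; apply: le_trans h _; rewrite /P; rewrite le_eqVlt; apply/orP; left; apply/eqP; ring.
have s3 : P * N * (2 * n) <= delta ^+ 2 / 4 * (2 * n).
  rewrite -hk ler_wpM2r //; first lra.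
  by rewrite ler_wpM2l //; lra.
have s4 : n * (delta / 2) ^+ 2 = delta ^+ 2 / 4 * n by field.
have d2 : 0 <= delta ^+ 2 by rewrite sqr_ge0.
nra.
Qed.

Theorem lemma4p5 (R : realType) (M : Type) (mul : M -> M -> M) (one : M)
  (X : topologicalType) (act : M -> X -> X)
  (I : Type) (le : I -> I -> Prop) (D : I -> finType)
  (sigma : forall i, M -> D i -> D i)
  (rho rho' : X -> X -> R) (F : set M) (delta : R) :
  is_monoid mul one ->
  compact [set: X] ->
  is_cont_action mul one act ->
  is_directed le ->
  strong_sofic_approx R mul one le sigma ->
  is_cont_pseudometric rho -> is_cont_pseudometric rho' ->
  dyn_generating act rho' ->
  finite_set F -> 0 < delta ->
  exists (F' : set M) (delta' : R) (i0 : I),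
    [/\ finite_set F', 0 < delta' &
      forall i, le i0 i ->
        Map_set act rho' F' delta' (sigma i) `<=` Map_set act rho F delta (sigma i)].
Proof.
move=> Hmon cX [act1 actM actc] [inhI lerefl letr leub] [D0 sig1 hmul hdist fib]
  [r0 rsym rtri rnn rc] [r'0 r'sym r'tri r'nn r'c] dg Ffin delta0.
have [C C0 Cb] := @rho_bounded R X rho cX rc rnn.
pose eps := delta / 2.
have eps0 : 0 < eps by rewrite divr_gt0.
have [l [eta eta0 sepH]] := @sep R X M act rho rho' cX actc rc r'c r0 dg eps eps0.
have [Fl HFl] := @fin_list M F Ffin.
have [De [De1 fibF]] := fib F Ffin.
pose N := size l.
pose kap := delta ^+ 2 / (4 * C ^+ 2 * ((N%:R : R) + 1)).
pose gam := kap / ((De%:R : R) + 1).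
pose c0 := Num.min 1 gam.
pose dp := eta / 4 * c0.
have N0 : 0 <= (N%:R : R) by rewrite ler0n.
have De0 : 0 <= (De%:R : R) by rewrite ler0n.
have kap0 : 0 < kap.
  rewrite /kap divr_gt0 ?exprn_gt0 //; apply: mulr_gt0; last lra.
  by rewrite mulr_gt0 ?exprn_gt0.
have gam0 : 0 < gam by rewrite /gam divr_gt0 //; lra.
have c00 : 0 < c0 by rewrite /c0 lt_min ltr01 gam0.
have c01 : c0 <= 1 by rewrite /c0 ge_min lexx.
have c0g : c0 <= gam by rewrite /c0 ge_min lexx orbT.
have [i0 Hi0] : exists i0, forall i, le i0 i -> forall s, List.In s l ->
    forall m, List.In m Fl ->
    d_ham R (sigma i (mul s m)) (sigma i s \o sigma i m) < kap.
  apply: (@ev_list I le M _ l inhI letr leub) => s.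
  apply: (@ev_list I le M _ Fl inhI letr leub) => m.
  have [i1 H1] := hmul s m kap kap0.
  exists i1 => i /H1; rewrite subr0; exact: (le_lt_trans (ler_norm _)).
pose L' := List.app l (List.flat_map (fun s => List.map (mul s) Fl) l).
exists [set x | List.In x L'], dp, i0; split.
- exact: list_fin.
- by rewrite /dp mulr_gt0 // divr_gt0.
move=> i ii0 phi Hphi m Fm.
have mFl : List.In m Fl by apply/HFl.
have inl : forall s, List.In s l -> List.In s L'.
  by move=> s h; apply: List.in_or_app; left.
have inml : forall s, List.In s l -> List.In (mul s m) L'.
  move=> s h; apply: List.in_or_app; right; apply/List.in_flat_map.
  by exists s; split => //; apply: List.in_map.
have n0 : 0 < (#|D i|%:R : R) by rewrite ltr0n.
have hB : forall s, List.In s l ->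
    #|B1 R X M act rho' eta (D i) (sigma i) phi s|%:R <= c0 * #|D i|%:R.
  move=> s sl; have h := Hphi s (inl s sl).
  exact: (@cheb2 R (D i) (fun w => rho' (phi (sigma i s w)) (act s (phi w)))
    (eta / 4) c0 (D0 i) (fun v => r'nn _ _) (divr_gt0 eta0 _) c00 c01 h).
have hA3 : forall s, List.In s l ->
    #|A3 R X M mul act rho' eta (D i) (sigma i) phi m s|%:R <= c0 * #|D i|%:R.
  move=> s sl; have h := Hphi (mul s m) (inml s sl).
  exact: (@cheb2 R (D i) (fun w => rho' (phi (sigma i (mul s m) w)) (act (mul s m) (phi w)))
    (eta / 4) c0 (D0 i) (fun v => r'nn _ _) (divr_gt0 eta0 _) c00 c01 h).
have hA1 : forall s, List.In s l ->
    #|A1 R X M act rho' eta (D i) (sigma i) phi m s|%:R <= De%:R * (c0 * #|D i|%:R).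
  move=> s sl; apply: le_trans (ler_wpM2l De0 (hB s sl)).
  rewrite -natrM ler_nat; apply: preim_card => w.
  by rewrite -mk_card; apply: fibF.
have hA2 : forall s, List.In s l ->
    #|A2 M mul (D i) (sigma i) m s|%:R <= kap * #|D i|%:R.
  move=> s sl; have := Hi0 i ii0 s sl m mFl.
  rewrite /d_ham mk_card ltr_pdivrMr // => h; exact: ltW h.
have key := @core_sum R X M mul act rho rho' actM r'sym r'tri rnn C eps eta l
  Cb eta0 (ltW eps0) sepH (D i) (sigma i) phi m.
have sumb := @sum_le_size R M (fun s =>
   #|A1 R X M act rho' eta (D i) (sigma i) phi m s|%:R +
   #|A2 M mul (D i) (sigma i) m s|%:R +
   #|A3 R X M mul act rho' eta (D i) (sigma i) phi m s|%:R) l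
   (De%:R * (c0 * #|D i|%:R) + kap * #|D i|%:R + c0 * #|D i|%:R)
   (fun s sl => lerD (lerD (hA1 s sl) (hA2 s sl)) (hA3 s sl)).
have tot := le_trans key (lerD (lexx _) (ler_wpM2l (sqr_ge0 C) sumb)).
have fin := @numfin R delta C N%:R De%:R c0 #|D i|%:R delta0 C0 N0 De0 n0 c0g.
have tot2 := le_trans tot fin.
rewrite /rho2 -(ger0_norm (ltW delta0)) -sqrtr_sqr ler_sqrt ?sqr_ge0 //.
by rewrite ler_pdivrMr.
Qed.
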